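(* Let $X\subseteq\mathbb{R}^k$ be a set of feasible alternatives, $\mathbf{f}=(f_1,f_2):X\to\mathbb{R}^2$ a vector criterion and $Y=\mathbf{f}(X)$. Consider three decision makers whose preference relations $\succ_1,\succ_2,\succ_3$ on $\mathbb{R}^2$ are cone relations with cones $K_1,K_2,K_3$, each $K_l$ being a convex pointed cone with $\mathbb{R}^2_+\subseteq K_l$ and $\mathbf{0}_2\notin K_l$. For $l=1,2,3$ let $$\mathbf{y}^{(l)}=\begin{pmatrix} w_1^{(l)}\\ -w_2^{(l)}\end{pmatrix},\qquad \bar{\mathbf{y}}^{(l)}=\begin{pmatrix} -v_1^{(l)}\\ v_2^{(l)}\end{pmatrix},$$ with all $w_i^{(l)},v_i^{(l)}>0$, be given such that $\mathbf{y}^{(l)}\succ_l\mathbf{0}_2$ and $\bar{\mathbf{y}}^{(l)}\succ_l\mathbf{0}_2$, where no two of $\mathbf{y}^{(1)},\mathbf{y}^{(2)},\mathbf{y}^{(3)}$ are codirectional, no two of $\bar{\mathbf{y}}^{(1)},\bar{\mathbf{y}}^{(2)},\bar{\mathbf{y}}^{(3)}$ are codirectional, and $w_1^{(l)}v_2^{(l)}-w_2^{(l)}v_1^{(l)}>0$ for every $l\in\{1,2,3\}$. Put $W(l,s)=w_1^{(l)}w_2^{(s)}-w_2^{(l)}w_1^{(s)}$ and $V(l,s)=v_2^{(l)}v_1^{(s)}-v_1^{(l)}v_2^{(s)}$. Then there exist unique indices $s_1,s_2\in\{1,2,3\}$ such that $W(l_1,s_1)>0$, $W(s_1,k_1)>0$,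 $V(l_2,s_2)>0$, $V(s_2,k_2)>0$ for some indices $l_q,k_q\in\{1,2,3\}$ with $l_q\ne k_q$, $l_q\neq s_q$, $k_q\ne s_q$ ($q=1,2$). Assume moreover that $w_1^{(s_1)}v_2^{(s_2)}-w_2^{(s_1)}v_1^{(s_2)}>0$. Define the vector criterion $\mathbf{g}=(g_1,g_2)$ on $X$ by $g_1=v_2^{(s_2)}f_1+v_1^{(s_2)}f_2$, $g_2=w_2^{(s_1)}f_1+w_1^{(s_1)}f_2$. Then $\hat P_{\mathbf{g}}(Y)\subseteq P(Y)$, where $\hat P_{\mathbf{g}}(Y)=\mathbf{f}(P_{\mathbf{g}}(X))$.
   Context: For $\mathbf{a},\mathbf{b}\in\mathbb{R}^m$, $\mathbf{a}\geq\mathbf{b}$ means $a_i\ge b_i$ for all $i$ and $\mathbf{a}\neq\mathbf{b}$; $\mathbb{R}^m_+=\{\mathbf{y}\in\mathbb{R}^m:\mathbf{y}\geq\mathbf{0}_m\}$. A binary relation $\mathfrak{R}$ on $\mathbb{R}^m$ is a cone relation with cone $K$ if $\mathbf{y}^{(1)}\mathfrak{R}\,\mathbf{y}^{(2)}\iff \mathbf{y}^{(1)}-\mathbf{y}^{(2)}\in K$. The Pareto set is $P(Y)=\{\mathbf{y}^*\in Y:\ \nexists\,\mathbf{y}\in Y,\ \mathbf{y}\geq\mathbf{y}^*\}$, and for a vector criterion $\mathbf{g}$ on $X$, $P_{\mathbf{g}}(X)=\{\mathbf{x}^*\in X:\ \nexists\,\mathbf{x}\in X,\ \mathbf{g}(\mathbf{x})\geq\mathbf{g}(\mathbf{x}^*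 )\}$. Two vectors are codirectional if one is a positive multiple of the other. *)

(* Defs.v *)
From HB Require Import structures.
From mathcomp Require Import all_boot all_order all_algebra.
Set Implicit Arguments. Unset Strict Implicit. Unset Printing Implicit Defensive.
Import Order.TTheory GRing.Theory Num.Theory.
Local Open Scope ring_scope.

Section Defs.
Variable R : realFieldType.

Definition vgeq (m : nat) (a b : 'rV[R]_m) : Prop :=
  (forall i, b ord0 i <= a ord0 i) /\ a <> b.

Definition orthant (m : nat) (y : 'rV[R]_m) : Prop := vgeq y 0.

Definition cone_rel (m : nat) (K : 'rV[R]_m -> Prop) (y1 y2 : 'rV[R]_m) : Prop :=
  K (y1 - y2).

Definition is_cone (m : nat) (K : 'rV[R]_m -> Prop) : Prop :=
  forall y t, K y -> 0 < t -> K (t *: y).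

Definition is_convex (m : nat) (K : 'rV[R]_m -> Prop) : Prop :=
  forall y z t, K y -> K z -> 0 <= t -> t <= 1 -> K (t *: y + (1 - t) *: z).

Definition is_pointed (m : nat) (K : 'rV[R]_m -> Prop) : Prop :=
  forall y, K y -> ~ K (- y).

Definition Pareto (m : nat) (Y : 'rV[R]_m -> Prop) (ys : 'rV[R]_m) : Prop :=
  Y ys /\ ~ (exists y, Y y /\ vgeq y ys).

Definition Pareto_crit (k m : nat) (X : 'rV[R]_k -> Prop) (g : 'rV[R]_k -> 'rV[R]_m)
  (xs : 'rV[R]_k) : Prop :=
  X xs /\ ~ (exists x, X x /\ vgeq (g x) (g xs)).

Definition image_set (k m : nat) (f : 'rV[R]_k -> 'rV[R]_m) (A : 'rV[R]_k -> Prop)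
  (y : 'rV[R]_m) : Prop := exists x, A x /\ f x = y.

Definition codirectional (m : nat) (a b : 'rV[R]_m) : Prop :=
  (exists t, 0 < t /\ a = t *: b) \/ (exists t, 0 < t /\ b = t *: a).

Definition vec2 (a b : R) : 'rV[R]_2 := \row_(i < 2) if val i == 0%N then a else b.
Definition idx1 : 'I_2 := @Ordinal 2 0 isT.
Definition idx2 : 'I_2 := @Ordinal 2 1 isT.
Definition coord1 (y : 'rV[R]_2) : R := y ord0 idx1.
Definition coord2 (y : 'rV[R]_2) : R := y ord0 idx2.

Definition middle_index (D : 'I_3 -> 'I_3 -> R) (s : 'I_3) : Prop :=
  exists l kk, [/\ l != kk, l != s, kk != s, 0 < D l s & 0 < D s kk].

End Defs.

(* Main.v *)
Require Import Defs.
From HB Require Import structures.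
From mathcomp Require Import all_boot all_order all_algebra.
From mathcomp Require Import lra ring.
Import Order.TTheory GRing.Theory Num.Theory.
Local Open Scope ring_scope.

Definition i0 : 'I_3 := @Ordinal 3 0 isT.
Definition i1 : 'I_3 := @Ordinal 3 1 isT.
Definition i2 : 'I_3 := @Ordinal 3 2 isT.

Lemma e3 (i : 'I_3) : [\/ i = i0, i = i1 | i = i2].
Proof.
case: i => [[|[|[|//]]]] Hi; [constructor 1|constructor 2|constructor 3]; exact: val_inj.
Qed.

Lemma three (a b c x : 'I_3) : a != b -> a != c -> b != c -> [\/ x = a, x = b | x = c].
Proof.
by case: (e3 a) => ->; case: (e3 b) => ->; case: (e3 c) => ->; case: (e3 x) => ->;
  rewrite ?eqxx //= => *; first [by constructor 1 | by constructor 2 | by constructor 3].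
Qed.

Ltac neqcontra := match goal with H : is_true (?a != ?a) |- _ => by rewrite eqxx in H end.

Lemma median3 (R : realFieldType) (r : 'I_3 -> R) (D : 'I_3 -> 'I_3 -> R) :
  (forall l s, (0 < D l s) <-> (r l < r s)) ->
  (forall l s, l != s -> r l != r s) -> exists! s, middle_index D s.
Proof.
move=> HD Hinj.
have med : forall a b c, a != c -> a != b -> c != b -> r a < r b -> r b < r c ->
    exists! s, middle_index D s.
  move=> a b c ac ab cb rab rbc; exists b; split.
    by exists a, c; split => //; apply/HD.
  move=> s' [l' [k' [lk ls ks /HD h1 /HD h2]]].
  have bc : b != c by rewrite eq_sym.
  case: (three a b c s' ab ac bc) => E; subst s' => //;
  case: (three a b c l' ab ac bc) => E; subst l'; try neqcontra;
  case: (three a b c k' ab ac bc) => E; subst k'; try neqcontra; exfalso; lra.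
have n01 := Hinj i0 i1 isT. have n02 := Hinj i0 i2 isT. have n12 := Hinj i1 i2 isT.
case: (ltgtP (r i0) (r i1)) n01 => // h01 _;
case: (ltgtP (r i0) (r i2)) n02 => // h02 _;
case: (ltgtP (r i1) (r i2)) n12 => // h12 _.
- exact: (med i0 i1 i2).
- exact: (med i0 i2 i1).
- exfalso; lra.
- exact: (med i2 i0 i1).
- exact: (med i1 i0 i2).
- exfalso; lra.
- exact: (med i1 i2 i0).
- exact: (med i2 i1 i0).
Qed.

Theorem theorem3 (R : realFieldType) (k : nat)
  (X : 'rV[R]_k -> Prop) (f : 'rV[R]_k -> 'rV[R]_2)
  (K : 'I_3 -> 'rV[R]_2 -> Prop)
  (w1 w2 v1 v2 : 'I_3 -> R) :
  (forall l, [/\ is_cone (K l), is_convex (K l), is_pointed (K l),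
                 (forall y, orthant y -> K l y) & ~ K l 0]) ->
  (forall l, [/\ 0 < w1 l, 0 < w2 l, 0 < v1 l & 0 < v2 l]) ->
  (forall l, cone_rel (K l) (vec2 (w1 l) (- w2 l)) 0) ->
  (forall l, cone_rel (K l) (vec2 (- v1 l) (v2 l)) 0) ->
  (forall l s, l != s ->
     ~ codirectional (vec2 (w1 l) (- w2 l)) (vec2 (w1 s) (- w2 s))) ->
  (forall l s, l != s ->
     ~ codirectional (vec2 (- v1 l) (v2 l)) (vec2 (- v1 s) (v2 s))) ->
  (forall l, 0 < w1 l * v2 l - w2 l * v1 l) ->
  let W := fun l s => w1 l * w2 s - w2 l * w1 s in
  let V := fun l s => v2 l * v1 s - v1 l * v2 s in
  let Y := image_set f X in
  [/\ (exists! s1, middle_index W s1),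
      (exists! s2, middle_index V s2) &
      forall s1 s2, middle_index W s1 -> middle_index V s2 ->
        0 < w1 s1 * v2 s2 - w2 s1 * v1 s2 ->
        let g := fun x => vec2 (v2 s2 * coord1 (f x) + v1 s2 * coord2 (f x))
                               (w2 s1 * coord1 (f x) + w1 s1 * coord2 (f x)) in
        forall y, image_set f (Pareto_crit X g) y -> Pareto Y y].
Proof.
move=> _ Hpos _ _ HcW HcV _ W V Y.
have pw1 l : 0 < w1 l by case: (Hpos l).
have pw2 l : 0 < w2 l by case: (Hpos l).
have pv1 l : 0 < v1 l by case: (Hpos l).
have pv2 l : 0 < v2 l by case: (Hpos l).
have posdiv (x p : R) : 0 < p -> (0 < x / p) = (0 < x).
  by move=> hp; rewrite pmulr_lgt0 // invr_gt0.
split.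
- apply: (@median3 R (fun l => w2 l / w1 l)).
    move=> l s /=; rewrite -(subr_gt0 (_ / _)).
    have -> : w2 s / w1 s - w2 l / w1 l = W l s / (w1 l * w1 s).
      rewrite /W; field; apply/andP; split; exact: lt0r_neq0.
    by rewrite posdiv ?mulr_gt0.
  move=> l s ls /=; apply/negP => /eqP E; apply: (HcW l s ls); left.
  exists (w1 l / w1 s); split; first by rewrite divr_gt0.
  have E2 : w2 l = (w2 s / w1 s) * w1 l.
    rewrite -E; field; exact: lt0r_neq0.
  apply/rowP => i; rewrite !mxE; case: i => [[|[|//]]] Hi /=.
    field; exact: lt0r_neq0.
  rewrite E2; field; exact: lt0r_neq0.
- apply: (@median3 R (fun l => v1 l / v2 l)).
    move=> l s /=; rewrite -(subr_gt0 (_ / _)).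
    have -> : v1 s / v2 s - v1 l / v2 l = V l s / (v2 l * v2 s).
      rewrite /V; field; apply/andP; split; exact: lt0r_neq0.
    by rewrite posdiv ?mulr_gt0.
  move=> l s ls /=; apply/negP => /eqP E; apply: (HcV l s ls); left.
  exists (v2 l / v2 s); split; first by rewrite divr_gt0.
  have E2 : v1 l = (v1 s / v2 s) * v2 l.
    rewrite -E; field; exact: lt0r_neq0.
  apply/rowP => i; rewrite !mxE; case: i => [[|[|//]]] Hi /=.
    rewrite E2; field; exact: lt0r_neq0.
  field; exact: lt0r_neq0.
- move=> s1 s2 _ _ _ g y [x [[Xx Hx] <-]]; split; first by exists x.
  move=> [y' [[x' [Xx' <-]] [Hge Hne]]]; apply: Hx; exists x'; split => //.
  have c1 : coord1 (f x) <= coord1 (f x') by exact: Hge.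
  have c2 : coord2 (f x) <= coord2 (f x') by exact: Hge.
  have a1 := pv1 s2; have a2 := pv2 s2; have b1 := pw1 s1; have b2 := pw2 s1.
  split.
    move=> i; rewrite /g /vec2 !mxE; case: i => [[|[|//]]] Hi /=; nra.
  move=> Eg; apply: Hne.
  have g1 : v2 s2 * coord1 (f x') + v1 s2 * coord2 (f x') =
            v2 s2 * coord1 (f x) + v1 s2 * coord2 (f x).
    by have := congr1 (fun m : 'rV[R]_2 => m ord0 idx1) Eg; rewrite /g /vec2 !mxE.
  have d1 : coord1 (f x') = coord1 (f x) by nra.
  have d2 : coord2 (f x') = coord2 (f x) by nra.
  apply/rowP => i.
  case: i => [[|[|//]]] Hi.
    by move: d1; rewrite /coord1 /idx1 (bool_irrelevance Hi isT).
  by move: d2; rewrite /coord2 /idx2 (bool_irrelevance Hi isT).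
Qed.
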